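(* Let $n\ge 2$ and let $A\subset S^n=\{x\in\mathbb R^{n+1}:\|x\|=1\}$ be a closed subset with $0<\mathrm{diam}(A)\le 1$. Then there exist distinct points $a_0,a_1\in A$ and a unit vector $b\in\mathbb R^{n+1}$ such that $\langle b,a_0\rangle=0=\max_{a\in A}\langle b,a\rangle$ and $\langle b,a_1\rangle>-\frac12\|a_1-a_0\|$.
   Context: $\langle\cdot,\cdot\rangle$ is the standard inner product and $\|\cdot\|$ the Euclidean norm on $\mathbb R^{n+1}$. *)

(* Defs.v *)
From HB Require Import structures.
From mathcomp Require Import all_boot all_order all_algebra.
From mathcomp Require Import all_classical all_reals all_analysis.
Set Implicit Arguments. Unset Strict Implicit. Unset Printing Implicit Defensive.
Import Order.TTheory GRing.Theory Num.Theory.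
Import numFieldNormedType.Exports.
Local Open Scope ring_scope.
Local Open Scope classical_set_scope.

Definition dotp (R : realType) (m : nat) (u v : 'rV[R]_m) : R :=
  \sum_(i < m) u ord0 i * v ord0 i.

Definition enorm (R : realType) (m : nat) (u : 'rV[R]_m) : R :=
  Num.sqrt (dotp u u).

Definition sphere (R : realType) (n : nat) : set 'rV[R]_n.+1 :=
  [set x | enorm x = 1].

Definition diam (R : realType) (m : nat) (A : set 'rV[R]_m) : R :=
  sup [set d | exists x y, [/\ A x, A y & d = enorm (x - y)]].
Arguments sphere : clear implicits.

(* Main.v *)
Require Import Defs.
From HB Require Import structures.
From mathcomp Require Import all_boot all_order all_algebra.
From mathcomp Require Import all_classical all_reals all_analysis.
From mathcomp Require Import ring lra zify.
Import Order.TTheory GRing.Theory Num.Theory.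
Import numFieldNormedType.Exports.
Local Open Scope ring_scope.
Local Open Scope classical_set_scope.

Section Dot.
Context {R : realType} {m : nat}.
Implicit Types (u v w : 'rV[R]_m) (k : R).

Lemma mul_self_ge0 (x : R) : 0 <= x * x.
Proof. by rewrite -expr2 sqr_ge0. Qed.

Lemma dotpC u v : dotp u v = dotp v u.
Proof. by rewrite /dotp; apply: eq_bigr => i _; rewrite mulrC. Qed.

Lemma dotpDl u v w : dotp (u + v) w = dotp u w + dotp v w.
Proof. by rewrite /dotp -big_split; apply: eq_bigr => i _; rewrite mxE mulrDl. Qed.

Lemma dotpZl k u w : dotp (k *: u) w = k * dotp u w.
Proof. by rewrite /dotp mulr_sumr; apply: eq_bigr => i _; rewrite mxE mulrA. Qed.

Lemma dotpNl u w : dotp (- u) w = - dotp u w.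
Proof. by rewrite -scaleN1r dotpZl mulN1r. Qed.

Lemma dotpBl u v w : dotp (u - v) w = dotp u w - dotp v w.
Proof. by rewrite dotpDl dotpNl. Qed.

Lemma dotpDr u v w : dotp w (u + v) = dotp w u + dotp w v.
Proof. by rewrite dotpC dotpDl !(dotpC w). Qed.

Lemma dotpZr k u w : dotp w (k *: u) = k * dotp w u.
Proof. by rewrite dotpC dotpZl dotpC. Qed.

Lemma dotpBr u v w : dotp w (u - v) = dotp w u - dotp w v.
Proof. by rewrite dotpC dotpBl !(dotpC w). Qed.

Lemma dotpNr u w : dotp w (- u) = - dotp w u.
Proof. by rewrite dotpC dotpNl dotpC. Qed.

Lemma dotp_ge0 u : 0 <= dotp u u.
Proof. by apply: sumr_ge0 => i _; rewrite mul_self_ge0. Qed.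

Lemma dotp_eq0 u : dotp u u = 0 -> u = 0.
Proof.
move=> h; apply/rowP => i; rewrite mxE.
have := psumr_eq0P (fun j _ => mul_self_ge0 (u ord0 j)) h (isT : xpredT i).
by move/eqP; rewrite mulf_eq0 orbb => /eqP.
Qed.

Lemma dotp0l u : dotp 0 u = 0.
Proof. by rewrite -(scale0r 0) dotpZl mul0r. Qed.

Lemma CS2 u v : dotp u v ^+ 2 <= dotp u u * dotp v v.
Proof.
have [V0|Vn0] := eqVneq (dotp v v) 0.
  by rewrite (dotp_eq0 _ V0) dotpC !dotp0l mulr0 expr2 mulr0.
have Vp : 0 < dotp v v by rewrite lt_neqAle eq_sym Vn0 dotp_ge0.
have := dotp_ge0 (dotp v v *: u - dotp u v *: v).
rewrite !(dotpBl, dotpBr, dotpZl, dotpZr) (dotpC v u).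
set U := dotp u u; set V := dotp v v; set P := dotp u v => h.
have : 0 <= V * (U * V - P ^+ 2) by move: h; congr (_ <= _); ring.
by rewrite pmulr_rge0 // subr_ge0.
Qed.

Lemma enorm_ge0 u : 0 <= enorm u.
Proof. exact: sqrtr_ge0. Qed.

Lemma enorm_sqr u : enorm u ^+ 2 = dotp u u.
Proof. by rewrite /enorm sqr_sqrtr // dotp_ge0. Qed.

Lemma CS u v : `|dotp u v| <= enorm u * enorm v.
Proof.
rewrite -sqrtr_sqr /enorm -sqrtrM ?dotp_ge0 // ler_sqrt ?CS2 //.
by rewrite mulr_ge0 ?dotp_ge0.
Qed.

Lemma CSl u v : dotp u v <= enorm u * enorm v.
Proof. exact: le_trans (ler_norm _) (CS u v). Qed.

Lemma CSr u v : - (enorm u * enorm v) <= dotp u v.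
Proof. by rewrite lerNl; apply: le_trans (CS u v); rewrite -normrN ler_norm. Qed.

Lemma enorm_normalize u : 0 < enorm u -> enorm ((enorm u)^-1 *: u) = 1.
Proof.
move=> h; set k := (enorm u)^-1; rewrite /enorm dotpZl dotpZr mulrA -expr2.
rewrite /k exprVn enorm_sqr mulVf ?sqrtr1 //.
by rewrite -enorm_sqr expf_neq0 // gt_eqF.
Qed.

End Dot.
Lemma dotp_cont (R : realType) m (z : 'rV[R]_m) : continuous (fun x : 'rV[R]_m => dotp z x).
Proof.
move=> x.
suff H : forall r : seq 'I_m,
  {for x, continuous (fun y : 'rV[R]_m => \sum_(i <- r) z ord0 i * y ord0 i)}.
  exact: (H (index_enum _)).
elim=> [|i r IH].
  have -> : (fun y : 'rV[R]_m => \sum_(i <- [::]) z ord0 i * y ord0 i) = fun=> 0.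
    by apply: funext => y; rewrite big_nil.
  exact: cst_continuous.
have -> : (fun y : 'rV[R]_m => \sum_(j <- i :: r) z ord0 j * y ord0 j) =
  (fun y => z ord0 i * y ord0 i) + (fun y => \sum_(j <- r) z ord0 j * y ord0 j).
  by apply: funext => y; rewrite big_cons.
apply: continuousD => //.
apply: (@continuousM _ _ (fun=> z ord0 i) (fun y : 'rV[R]_m => y ord0 i)).
  exact: cst_continuous.
exact: coord_continuous.
Qed.

Lemma exists_orth (R : realType) n (c q : 'rV[R]_n.+1) : (2 <= n)%N ->
  exists w, w != 0 /\ dotp w c = 0 /\ dotp w q = 0.
Proof.
move=> hn.
pose M := row_mx c^T q^T.
have rk : (\rank M <= 2)%N by exact: rank_leq_col.
have KM : kermx M != 0.
  apply/negP => /eqP K0; have := mxrank_ker M; rewrite K0 mxrank0; lia.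
have [i Hi] : exists i, row i (kermx M) != 0.
  apply: contrapT => H; move/eqP: KM; apply; apply/row_matrixP => i.
  rewrite row0; apply/eqP/negPn/negP => h; apply: H; by exists i.
exists (row i (kermx M)); split => //.
have := row_sub i (kermx M); rewrite sub_kermx mul_mx_row row_mx_eq0.
move=> /andP[/eqP h1 /eqP h2].
have E : forall v : 'rV[R]_n.+1, dotp (row i (kermx M)) v = (row i (kermx M) *m v^T) ord0 ord0.
  by move=> v; rewrite mxE; apply: eq_bigr => j _; rewrite !mxE.
by rewrite !E h1 h2 !mxE.
Qed.

Lemma prod_bound {R : realType} {x y a b : R} : `|x| <= a -> `|y| <= b -> -(a*b) <= x*y <= a*b.
Proof.
move=> hx hy; rewrite -ler_norml normrM; apply: ler_pM => //; exact: normr_ge0.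
Qed.
Lemma bnd (R : realType) n (A : set 'rV[R]_n.+1) :
  A `<=` sphere R n -> bounded_set A.
Proof.
move=> hA; exists 1; split; first exact: num_real.
move=> M M1 x Ax /=; apply: le_trans (ltW M1).
have dx : dotp x x = 1 by rewrite -enorm_sqr (hA x Ax) expr1n.
rewrite [leLHS]/Num.norm /= mx_normrE; apply: bigmax_le => // -[i j] _ /=.
have : x i j * x i j <= 1.
  rewrite -dx /dotp (ord1 i) (bigD1 j) //= lerDl.
  by apply: sumr_ge0 => k _; exact: mul_self_ge0.
by move=> h; rewrite ler_norml; apply/andP; split; nra.
Qed.

Theorem lemma2p2 (R : realType) (n : nat) (A : set 'rV[R]_n.+1) :
  (2 <= n)%N ->
  A `<=` sphere R n ->
  closed A ->
  0 < diam A <= 1 ->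
  exists a0 a1 b : 'rV[R]_n.+1,
    [/\ A a0, A a1, a0 != a1 & enorm b = 1] /\
    [/\ dotp b a0 = 0,
        (forall a, A a -> dotp b a <= 0) &
        dotp b a1 > - (enorm (a1 - a0) / 2)].
Proof.
move=> hn hA hcl /andP[d0 d1].
have nA : forall x, A x -> enorm x = 1 by move=> x /hA.
have unitA : forall x, A x -> dotp x x = 1.
  by move=> x Ax; rewrite -enorm_sqr nA // expr1n.
have dxy : forall x y, A x -> A y -> dotp (x - y) (x - y) = 2 - 2 * dotp x y.
  move=> x y Ax Ay; rewrite !(dotpBl, dotpBr) (dotpC y x) unitA // unitA //; ring.
set S := [set d | exists x y, [/\ A x, A y & d = enorm (x - y)]].
have dS : diam A = sup S by [].
have hS : forall x y, A x -> A y -> enorm (x - y) <= diam A.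
  move=> x y Ax Ay; rewrite dS; apply: sup_upper_bound; last by exists x, y.
  split; first by exists (enorm (x - y)), x, y.
  exists 2 => d [x' [y' [Ax' Ay' ->]]].
  have h1 := CSr x' y'; rewrite !nA // mulr1 in h1.
  have e0 := enorm_ge0 (x' - y').
  have h2 := enorm_sqr (x' - y'); rewrite dxy // in h2.
  nra.
have half : forall x y, A x -> A y -> 1/2 <= dotp x y.
  move=> x y Ax Ay; have h := hS x y Ax Ay.
  have e0 := enorm_ge0 (x - y).
  have h2 := enorm_sqr (x - y); rewrite dxy // in h2.
  nra.
have [c [q [Ac Aq cq]]] : exists c q, [/\ A c, A q & c != q].
  apply: contrapT => H.
  have eqA : forall x y, A x -> A y -> x = y.
    move=> x y Ax Ay; apply/eqP/negPn/negP => xy; apply: H; by exists x, y.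
  suff : diam A <= 0 by lra.
  rewrite dS; have [[x Ax]|nx] := pselect (exists x, A x).
    apply: ge_sup; first by exists 0, x, x; rewrite subrr /enorm dotp0l sqrtr0.
    move=> d [x' [y' [Ax' Ay' ->]]].
    by rewrite (eqA x' y') // subrr /enorm dotp0l sqrtr0.
  have -> : S = set0.
    by apply/seteqP; split => // d [x' [y' [Ax' _ _]]]; apply: nx; exists x'.
  by rewrite sup0.
set P := dotp c q.
have P2 : 1/2 <= P by exact: half.
have P1 : P < 1.
  have h := dxy c q Ac Aq.
  have : dotp (c - q) (c - q) != 0.
    by apply/negP => /eqP /dotp_eq0 /eqP; rewrite subr_eq0; apply/negP.
  have := dotp_ge0 (c - q); rewrite h -/P => h1 h2.
  rewrite lt_neqAle; apply/andP; split; last by lra.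
  by apply/negP => /eqP P1; rewrite P1 in h2; move: h2; rewrite mulr1 subrr eqxx.
have [u ueq] : exists u, u = q - P *: c by eexists.
have cc : dotp c c = 1 by exact: unitA.
have cu : dotp c u = 0 by rewrite ueq dotpBr dotpZr cc -/P mulr1 subrr.
have uc : dotp u c = 0 by rewrite dotpC.
have uq : dotp u q = 1 - P ^+ 2.
  by rewrite ueq dotpBl dotpZl unitA // dotpC -/P expr2.
have uq0 : 0 < dotp u q by rewrite uq; nra.
have [w [w0 [wc wq]]] := exists_orth _ _ c q hn.
have cw : dotp c w = 0 by rewrite dotpC.
have wu : dotp w u = 0 by rewrite ueq dotpBr dotpZr wc wq mulr0 subrr.
have uw : dotp u w = 0 by rewrite dotpC.
have wpos : 0 < enorm w.
  rewrite sqrtr_gt0 lt_neqAle dotp_ge0 andbT eq_sym.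
  by apply/negP => /eqP /dotp_eq0 /eqP; apply/negP.
have cpos : forall x, A x -> 0 < dotp c x.
  by move=> x Ax; have := half c x Ac Ax; lra.
have cne : forall x, A x -> dotp c x != 0.
  by move=> x Ax; rewrite gt_eqF // cpos.
pose g (s : R) (x : 'rV[R]_n.+1) := (dotp w x + s * dotp u x) / dotp c x.
have gmul : forall s x, A x -> g s x * dotp c x = dotp w x + s * dotp u x.
  by move=> s x Ax; rewrite /g divfK // cne.
have rb : forall z x, A x -> `|dotp z x / dotp c x| <= 2 * enorm z.
  move=> z x Ax; have h := CS z x; rewrite (nA x Ax) mulr1 in h.
  have hc := half c x Ac Ax.
  rewrite normrM normfV (gtr0_norm (cpos x Ax)) ler_pdivrMr ?cpos //.
  have := normr_ge0 (dotp z x); nra.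
have shift : forall s s' x, A x ->
    g s' x = g s x + (s' - s) * (dotp u x / dotp c x).
  by move=> s s' x Ax; rewrite /g; field; rewrite cne.
have gcont : forall s, {within A, continuous (g s)}.
  move=> s; apply: continuous_in_subspaceT => x; rewrite in_setE => Ax.
  apply: (@continuousM _ _ (fun y => dotp w y + s * dotp u y) (fun y => (dotp c y)^-1)).
    apply: (@continuousD _ _ _ (fun y => dotp w y) (fun y => s * dotp u y)).
      exact: dotp_cont.
    apply: (@continuousM _ _ (fun=> s) (fun y => dotp u y)).
      exact: cst_continuous.
    exact: dotp_cont.
  apply: continuousV; first exact: cne.
  exact: dotp_cont.
have cA : compact A by apply: bounded_closed_compact => //; exact: bnd.
have maxex : forall s, exists a, A a /\ forall x, A x -> g s x <= g s a.
  move=> s; have [a aA ha] := EVT_max_rV (ex_intro _ c Ac) cA (gcont s).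
  exists a; split; first by rewrite in_setE in aA.
  by move=> x Ax; apply: ha; rewrite in_setE.
apply: contrapT => NG.
have key : forall s s' a a', `|s' - s| * enorm u * 6 < enorm w ->
    A a -> (forall x, A x -> g s x <= g s a) ->
    A a' -> (forall x, A x -> g s' x <= g s' a') -> a = a'.
  move=> s s' a a' hss Aa ha Aa' ha'.
  have [//|neq] := eqVneq a a'.
  exfalso; apply: NG.
  set m := g s a; set m' := g s' a'.
  set B' := w + s' *: u - m' *: c.
  have hB' : forall x, dotp B' x = dotp w x + s' * dotp u x - m' * dotp c x.
    by move=> x; rewrite /B' !(dotpDl, dotpBl, dotpNl, dotpZl).
  have BB : dotp B' B' = dotp w w + s' ^+ 2 * dotp u u + m' ^+ 2.
    rewrite /B' !(dotpDl, dotpBl, dotpNl, dotpZl, dotpDr, dotpBr, dotpNr, dotpZr).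
    rewrite wu uw wc cw uc cu cc; ring.
  have Bw : enorm w <= enorm B'.
    rewrite /enorm ler_sqrt ?dotp_ge0 // BB.
    have := dotp_ge0 u; nra.
  have Bpos : 0 < enorm B' := lt_le_trans wpos Bw.
  have Ba' : dotp B' a' = 0 by rewrite hB' -(gmul s' a' Aa') -/m' subrr.
  have Ble : forall x, A x -> dotp B' x <= 0.
    move=> x Ax; rewrite hB' -(gmul s' x Ax) -mulrBl; apply: mulr_le0_ge0.
      by rewrite subr_le0; exact: ha'.
    exact: ltW (cpos x Ax).
  set e := enorm (a - a').
  have epos : 0 < e.
    rewrite sqrtr_gt0 lt_neqAle dotp_ge0 andbT eq_sym.
    by apply/negP => /eqP /dotp_eq0 /eqP; rewrite subr_eq0; apply/negP.
  have Xineq : - (enorm B' * e) / 2 < dotp B' a.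
    have E3 := gmul s a Aa; rewrite -/m in E3.
    have E4 := gmul s' a' Aa'; rewrite -/m' in E4.
    have hY : g s a' <= m by exact: ha.
    have hY' : g s' a <= m' by exact: ha'.
    have sh1 := shift s s' a Aa; have sh2 := shift s' s a' Aa'.
    rewrite -/m in sh1; rewrite -/m' in sh2.
    have r1 := rb u a Aa; have r2 := rb u a' Aa'.
    have [p1 p2] := andP (prod_bound (lexx `|s' - s|) r1).
    have [p3 p4] := andP (prod_bound (lexx `|s - s'|) r2).
    rewrite distrC in p3 p4.
    have Mb : `|m' - m| <= `|s' - s| * (2 * enorm u).
      rewrite ler_norml; apply/andP; split; lra.
    have Pb : `|dotp u (a - a')| <= enorm u * e by have := CS u (a - a'); rewrite -/e.
    have Qb : `|dotp c (a - a')| <= 1 * e by have := CS c (a - a'); rewrite -/e nA.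
    have [q1 q2] := andP (prod_bound (lexx `|s' - s|) Pb).
    have [q3 q4] := andP (prod_bound Mb Qb).
    rewrite !dotpBr in q1 q2 q3 q4.
    have h3 : `|s' - s| * enorm u * 6 * e < enorm w * e by rewrite ltr_pM2r.
    have h4 : enorm w * e <= enorm B' * e by rewrite ler_pM2r.
    have E1 := hB' a.
    have hmC : g s a' * dotp c a' <= m * dotp c a'.
      by rewrite ler_pM2r ?cpos.
    rewrite gmul // in hmC.
    lra.
  exists a', a, ((enorm B')^-1 *: B'); split; first split => //.
  - by rewrite eq_sym.
  - exact: enorm_normalize.
  split.
  - by rewrite dotpZl Ba' mulr0.
  - move=> x Ax; rewrite dotpZl; apply: mulr_ge0_le0; last exact: Ble.
    by rewrite invr_ge0 ltW.
  - rewrite dotpZl [_^-1 * _]mulrC ltr_pdivlMr // -/e.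
    move: Xineq; lra.
pose kap := dotp u q / dotp c q.
have kpos : 0 < kap by rewrite divr_gt0 // cpos.
pose L := 5 * enorm w / kap.
have Lpos : 0 < L by rewrite divr_gt0 // mulr_gt0.
pose X := 12 * L * enorm u / enorm w.
have X0 : 0 <= X.
  by rewrite divr_ge0 ?enorm_ge0 // mulr_ge0 ?enorm_ge0 // mulr_ge0 // ltW.
pose N := Num.Def.archi_bound X.
have XN : X < N%:R := archi_boundP X0.
have Npos : 0 < (N%:R : R) by exact: le_lt_trans X0 XN.
pose h := 2 * L / N%:R.
have hpos : 0 < h by rewrite divr_gt0 // mulr_gt0.
have hcond : h * enorm u * 6 < enorm w.
  have -> : h * enorm u * 6 = (X * enorm w) / N%:R.
    by rewrite /h /X; field; rewrite !gt_eqF.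
  by rewrite ltr_pdivrMr // mulrC ltr_pM2l.
pose s (k : nat) := L - k%:R * h.
have [a0 [Aa0 ha0]] := maxex (s 0%N).
have chain : forall k, forall x, A x -> g (s k) x <= g (s k) a0.
  elim=> [|k IH]; first exact: ha0.
  have [a' [Aa' ha']] := maxex (s k.+1).
  have e : a0 = a'.
    apply: (key (s k) (s k.+1) a0 a') => //.
    have -> : s k.+1 - s k = - h by rewrite /s -addn1 natrD; ring.
    by rewrite normrN gtr0_norm.
  by rewrite e.
have sN : s N = - L by rewrite /s /h; field; rewrite gt_eqF.
have s0 : s 0%N = L by rewrite /s mul0r subr0.
have h1 := ha0 q Aq; rewrite s0 in h1.
have h2 := chain N c Ac; rewrite sN in h2.
have gq : g L q = L * kap by rewrite /g wq add0r mulrA.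
have gc : g (-L) c = 0 by rewrite /g wc uc mulr0 addr0 mul0r.
have sum : g L a0 + g (-L) a0 = 2 * (dotp w a0 / dotp c a0).
  by rewrite /g; field; rewrite cne.
have := rb w a0 Aa0; rewrite ler_norml => /andP[_ hw].
have Lk : L * kap = 5 * enorm w by rewrite /L; field; rewrite gt_eqF.
lra.
Qed.
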